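(* Consider the one-ported gather/scatter tree model described in the context, with arbitrary block sizes $m_i\ge0$ and arbitrary parameters $\alpha_{ij},\beta_{ij},\gamma_i\ge 0$. For a nonempty set $P\subseteq\{0,\dots,p-1\}$ and $r\in P$ let $\mathrm{OPT}(P,r)$ be the minimum completion time of a communication tree on $P$ with root $r$. Then $\mathrm{OPT}(\{q\},q)=0$ for every $q$, and for $|P|\ge 2$, \[ \mathrm{OPT}(P,r)=\min\Big\{\ \min_{r'\in P\setminus\{r\}}\big[\max(\gamma_r m_r,\mathrm{OPT}(P\setminus\{r\},r'))+\alpha_{r'r}+\beta_{r'r}\mathrm{Size}(P\setminus\{r\})\big],\ \ \min_{(R,\bar R),\,r'\in\bar R}\big[\max(\mathrm{OPT}(R,r),\mathrm{OPT}(\bar R,r'))+\alpha_{r'r}+\beta_{r'r}\mathrm{Size}(\bar R)\big]\Big\}, \] where the second minimum ranges over all partitions $P=R\cup\bar R$ into disjoint sets with $r\in R$, $|R|\ge 2$, $\bar R\neq\emptyset$, and over $r'\in\bar R$. (That is, optimal trees have optimal substructure.)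
   Context: There are $p$ processors $0,\dots,p-1$; processor $i$ has a data block of size $m_i\ge 0$. For a set $R$ of processors, $\mathrm{Size}(R)=\sum_{i\in R}m_i$. For every ordered pair of distinct processors $i,j$ there are a start-up latency $\alpha_{ij}\ge 0$ and a time per unit $\beta_{ij}\ge 0$, and each processor $i$ has a local copy cost $\gamma_i\ge0$ per unit. A communication tree on a nonempty finite set $R$ of processors with root $r\in R$ is either the trivial tree (only when $R=\{r\}$), or consists of the root $r$ together with a finite sequence of entries $(E_0,\dots,E_j)$ in which exactly one entry is a special ''local copy'' marker and every other entry $E_t$ is a communication tree on a set $R_t$ with root $r_t$, there is at least one such tree entry, and the sets $\{r\}$ and the $R_t$ partition $R$. Completion time (one-ported): the trivial tree has cost $0$; otherwise with $c_{-1}=0$, $c_t=c_{t-1}+\gamma_r m_r$ if $E_t$ is the local copy marker and $c_t=\max(c_{t-1},\mathrm{cost}(E_t))+\alpha_{r_t r}+\beta_{r_t r}\,\mathrm{Size}(R_t)$ if $E_t$ is a tree on $R_t$ with root $r_t$; $\mathrm{cost}(T)=c_j$. *)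

(* Defs.v *)
From Stdlib Require List.
From HB Require Import structures.
From mathcomp Require Import classical_sets reals.
From mathcomp Require Import all_boot all_order all_algebra.
Set Implicit Arguments. Unset Strict Implicit. Unset Printing Implicit Defensive.
Import Order.TTheory GRing.Theory Num.Theory.
Local Open Scope ring_scope.

(* A (syntactic) communication tree: a root label and a list of entries;
   [None] is the "local copy" marker, [Some T] a subtree entry.
   The trivial tree is [CNode r [::]]. *)
Inductive ctree (p : nat) : Type :=
  CNode : 'I_p -> seq (option (ctree p)) -> ctree p.

Definition troot p (T : ctree p) : 'I_p := let: CNode r _ := T in r.

Definition subtrees p (es : seq (option (ctree p))) : seq (ctree p) :=
  pmap id es.

Fixpoint tset p (T : ctree p) : {set 'I_p} :=
  let: CNode r es := T in
  r |: (fix go (l : seq (option (ctree p))) : {set 'I_p} :=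
          match l with
          | [::] => set0
          | None :: l' => go l'
          | Some T' :: l' => tset T' :|: go l'
          end) es.

Definition is_marker p (E : option (ctree p)) : bool :=
  if E is None then true else false.

Inductive tree_on (p : nat) : {set 'I_p} -> 'I_p -> ctree p -> Prop :=
| trivial_on (r : 'I_p) : tree_on [set r] r (CNode r [::])
| node_on (R : {set 'I_p}) (r : 'I_p) (es : seq (option (ctree p))) :
    count (@is_marker p) es = 1%N ->
    (0 < size (subtrees es))%N ->
    (forall T, List.In (Some T) es -> tree_on (tset T) (troot T) T) ->
    R = r |: \bigcup_(T <- subtrees es) tset T ->
    (forall T, List.In T (subtrees es) -> r \notin tset T) ->
    (forall i j, (i < j < size (subtrees es))%N ->
       [disjoint tset (nth (CNode r [::]) (subtrees es) i)
               & tset (nth (CNode r [::]) (subtrees es) j)]) ->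
    tree_on R r (CNode r es).

Section Model.
Variables (R : realType) (p : nat) (m : 'I_p -> R)
          (alpha beta : 'I_p -> 'I_p -> R) (gamma : 'I_p -> R).

Definition Size (S : {set 'I_p}) : R := \sum_(i in S) m i.

Fixpoint cost (T : ctree p) : R :=
  let: CNode r es := T in
  (fix go (c : R) (l : seq (option (ctree p))) : R :=
     match l with
     | [::] => c
     | None :: l' => go (c + gamma r * m r) l'
     | Some T' :: l' =>
         go (Num.max c (cost T') + alpha (troot T') r
               + beta (troot T') r * Size (tset T')) l'
     end) 0 es.

(* OPT(P, r): minimum completion time over communication trees on P rooted at r
   (taken as the infimum of the (finite, nonempty) set of achievable costs). *)
Definition OPT (P : {set 'I_p}) (r : 'I_p) : R :=
  inf [set c | exists T, tree_on P r T /\ c = cost T]%classic.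

End Model.

(* Main.v *)
Require Import Defs.
From HB Require Import structures.
From mathcomp Require Import classical_sets reals.
From mathcomp Require Import all_boot all_order all_algebra.
From mathcomp Require Import lra zify.
Import Order.TTheory GRing.Theory Num.Theory.
Local Open Scope ring_scope.
Set Implicit Arguments. Unset Strict Implicit.

Section Aux.
Variables (R : realType) (p : nat) (m : 'I_p -> R)
          (alpha beta : 'I_p -> 'I_p -> R) (gamma : 'I_p -> R).
Hypotheses (hm : forall i, 0 <= m i)
    (halpha : forall i j, 0 <= alpha i j)
    (hbeta : forall i j, 0 <= beta i j)
    (hgamma : forall i, 0 <= gamma i).

Local Notation cost := (cost m alpha beta gamma).
Local Notation OPT := (OPT m alpha beta gamma).
Local Notation Size := (Size m).

Definition goc (r : 'I_p) :=
  fix go (c : R) (l : seq (option (ctree p))) : R :=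
     match l with
     | [::] => c
     | None :: l' => go (c + gamma r * m r) l'
     | Some T' :: l' =>
         go (Num.max c (cost T') + alpha (troot T') r
               + beta (troot T') r * Size (tset T')) l'
     end.

Lemma costE r es : cost (CNode r es) = goc r 0 es.
Proof. by []. Qed.

Lemma goc_nil r c : goc r c [::] = c. Proof. by []. Qed.
Lemma goc_None r c l : goc r c (None :: l) = goc r (c + gamma r * m r) l.
Proof. by []. Qed.
Lemma goc_Some r c T l : goc r c (Some T :: l) =
  goc r (Num.max c (cost T) + alpha (troot T) r
               + beta (troot T) r * Size (tset T)) l.
Proof. by []. Qed.

Lemma goc_cat r c l1 l2 : goc r c (l1 ++ l2) = goc r (goc r c l1) l2.
Proof.
elim: l1 c => [|[T|] l1 IH] c //=; by rewrite ?goc_None ?goc_Some IH.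
Qed.

Lemma Size_ge0 S : 0 <= Size S.
Proof. by apply: sumr_ge0 => i _. Qed.

Lemma step_ge0 T r : 0 <= alpha (troot T) r + beta (troot T) r * Size (tset T).
Proof. by apply: addr_ge0 => //; apply: mulr_ge0 => //; apply: Size_ge0. Qed.

Lemma goc_mono r l c1 c2 : c1 <= c2 -> goc r c1 l <= goc r c2 l.
Proof.
elim: l c1 c2 => [|[T|] l IH] c1 c2 h //.
- rewrite !goc_Some; apply: IH; rewrite -!addrA lerD2r.
  by rewrite ge_max !le_max h lexx orbT.
- by rewrite !goc_None; apply: IH; rewrite lerD2r.
Qed.

Lemma goc_ge r l c : c <= goc r c l.
Proof.
elim: l c => [|[T|] l IH] c //.
- rewrite goc_Some; apply: le_trans (IH _).
  rewrite -addrA; apply: (@le_trans _ _ (Num.max c (cost T))); first by rewrite le_max lexx.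
  by rewrite lerDl step_ge0.
- rewrite goc_None; apply: le_trans (IH _).
  by rewrite lerDl mulr_ge0.
Qed.

Lemma goc_shift r l c d : 0 <= c -> goc r (d + c) l <= goc r d l + c.
Proof.
elim: l c d => [|[T|] l IH] c d hc //.
- rewrite !goc_Some; apply: le_trans (IH _ _ hc).
  apply: goc_mono.
  have H : Num.max (d + c) (cost T) <= Num.max d (cost T) + c.
    rewrite ge_max lerD2r le_max lexx /=.
    apply: (@le_trans _ _ (Num.max d (cost T))); first by rewrite le_max lexx orbT.
    by rewrite lerDl.
  lra.
- rewrite !goc_None -addrA [c + _]addrC addrA; exact: IH.
Qed.

Lemma cost_ge0 T : 0 <= cost T.
Proof. by case: T => r es; rewrite costE goc_ge. Qed.


Definition tsets : seq (option (ctree p)) -> {set 'I_p} :=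
  fix go (l : seq (option (ctree p))) : {set 'I_p} :=
          match l with
          | [::] => set0
          | None :: l' => go l'
          | Some T' :: l' => tset T' :|: go l'
          end.

Lemma tsetE r es : tset (CNode r es) = r |: tsets es.
Proof. by []. Qed.

Lemma tsets_big es : tsets es = \bigcup_(T <- subtrees es) tset T.
Proof.
elim: es => [|[T|] es IH]; first by rewrite /subtrees /= big_nil.
- by rewrite /subtrees /= big_cons -IH.
- by rewrite /subtrees /= -IH.
Qed.

Lemma troot_in (T : ctree p) : troot T \in tset T.
Proof. by case: T => r es; rewrite tsetE setU11. Qed.

Lemma tree_on_tset P r (T : ctree p) : tree_on P r T -> tset T = P /\ troot T = r.
Proof.
case => [r0 | R0 r0 es _ _ _ -> _ _]; split => //.
- by rewrite tsetE /= setU0.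
- by rewrite tsetE tsets_big.
Qed.

Lemma In_subtrees es (T : ctree p) : List.In (Some T) es <-> List.In T (subtrees es).
Proof.
elim: es => [|[T'|] es IH] /=; first by [].
- rewrite /subtrees /=; split.
    by case => [[->]|/IH]; [left|right].
  by case => [->|/IH]; [left|right].
- rewrite /subtrees /=; split; first by case => // /IH.
  by move/IH; right.
Qed.

Lemma In_rcons (A : Type) (s : seq A) x y :
  List.In y (rcons s x) <-> List.In y s \/ y = x.
Proof.
rewrite -cats1 List.in_app_iff /=; split.
  by case => [?|[->|[]]]; auto.
by case => [?|->]; [left|right; left].
Qed.

Lemma allIn (A : Type) (a : pred A) s :
  all a s <-> (forall x, List.In x s -> a x).
Proof.
elim: s => [|x s IH] /=; first by [].
split.
  by case/andP => ax /IH H y [<-|/H].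
move=> H; apply/andP; split; first by apply: H; left.
by apply/IH => y hy; apply: H; right.
Qed.

Lemma subtrees_rcons (l : seq (option (ctree p))) x :
  subtrees (rcons l x) = if x is Some T then rcons (subtrees l) T else subtrees l.
Proof.
rewrite /subtrees -cats1 pmap_cat; case: x => [T|] /=.
  by rewrite cats1.
by rewrite cats0.
Qed.

Lemma subtrees_cons x (l : seq (option (ctree p))) :
  subtrees (x :: l) = if x is Some T then T :: subtrees l else subtrees l.
Proof. by case: x. Qed.

Lemma big_rcons_set (s : seq (ctree p)) T :
  \bigcup_(T0 <- rcons s T) tset T0 = (\bigcup_(T0 <- s) tset T0) :|: tset T.
Proof. by rewrite -cats1 big_cat big_seq1. Qed.

Lemma sub_bigcup (s : seq (ctree p)) T :
  List.In T s -> tset T \subset \bigcup_(T0 <- s) tset T0.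
Proof.
elim: s => [|T0 s IH] //= [->|/IH H]; rewrite big_cons; first exact: subsetUl.
exact: subset_trans H (subsetUr _ _).
Qed.

Lemma disj_bigcup (s : seq (ctree p)) (B : {set 'I_p}) :
  (forall T, List.In T s -> [disjoint tset T & B]) ->
  [disjoint \bigcup_(T0 <- s) tset T0 & B].
Proof.
elim: s => [|T0 s IH] H; first by rewrite big_nil disjoints_subset sub0set.
rewrite big_cons disjoints_subset subUset -!disjoints_subset.
rewrite H /=; last by left.
by apply: IH => T hT; apply: H; right.
Qed.

Definition node_ok (P : {set 'I_p}) (r : 'I_p) (es : seq (option (ctree p))) :=
  [/\ count (@is_marker p) es = 1%N, (0 < size (subtrees es))%N,
      (forall T, List.In T (subtrees es) -> tree_on (tset T) (troot T) T),
      P = r |: \bigcup_(T <- subtrees es) tset T &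
      (forall T, List.In T (subtrees es) -> r \notin tset T) /\
      pairwise (fun A B : {set 'I_p} => [disjoint A & B])
         (map (@tset p) (subtrees es))].

Lemma pairwise_nth (r : 'I_p) (es : seq (option (ctree p))) :
  (forall i j, (i < j < size (subtrees es))%N ->
       [disjoint tset (nth (CNode r [::]) (subtrees es) i)
               & tset (nth (CNode r [::]) (subtrees es) j)]) <->
  pairwise (fun A B : {set 'I_p} => [disjoint A & B])
         (map (@tset p) (subtrees es)).
Proof.
split.
- move=> H; apply/(pairwiseP (tset (CNode r [::]))) => i j.
  rewrite !inE size_map => hi hj hij.
  rewrite !(nth_map (CNode r [::])) //; apply: H; by rewrite hij.
- move/(pairwiseP (tset (CNode r [::]))) => H i j /andP [hij hj].
  have hi : (i < size (subtrees es))%N by apply: ltn_trans hij hj.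
  rewrite -!(nth_map (CNode r [::]) (tset (CNode r [::]))) //.
  by apply: H; rewrite ?inE ?size_map.
Qed.

Lemma node_okP P r es : node_ok P r es -> tree_on P r (CNode r es).
Proof.
case=> h1 h2 h3 h4 [h5 h6]; apply: node_on => //.
- by move=> T0 /In_subtrees; apply: h3.
- by apply/pairwise_nth.
Qed.

Lemma tree_on_node P r (T : ctree p) : tree_on P r T -> (1 < #|P|)%N ->
  exists es, T = CNode r es /\ node_ok P r es.
Proof.
case => [r0 | R0 r0 es h1 h2 h3 h4 h5 h6].
  by rewrite cards1.
move=> _; exists es; split => //; split => //.
- by move=> T0 /In_subtrees; apply: h3.
- split; first exact: h5.
  by apply/(pairwise_nth r0).
Qed.

Lemma OPT_le P r T : tree_on P r T -> OPT P r <= cost T.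
Proof.
move=> hT; apply: ge_inf; last by exists T.
by exists 0 => y [T0 [_ ->]]; exact: cost_ge0.
Qed.

Lemma OPT_ge P r v T0 : tree_on P r T0 ->
  (forall T, tree_on P r T -> v <= cost T) -> v <= OPT P r.
Proof.
move=> hT0 H; apply: lb_le_inf; first by exists (cost T0), T0.
by move=> y [T [hT ->]]; exact: H.
Qed.

Definition cand (P : {set 'I_p}) (r : 'I_p) (v : R) : Prop :=
       (exists2 r', r' \in P :\ r &
          v = Num.max (gamma r * m r) (OPT (P :\ r) r')
              + alpha r' r + beta r' r * Size (P :\ r))
       \/
       (exists (Q : {set 'I_p}) (r' : 'I_p),
          [/\ Q \subset P, r \in Q, (2 <= #|Q|)%N, P :\: Q != set0 &
              r' \in P :\: Q] /\
              v = Num.max (OPT Q r) (OPT (P :\: Q) r')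
                  + alpha r' r + beta r' r * Size (P :\: Q)).

Lemma nosub_count (l : seq (option (ctree p))) :
  size (subtrees l) = 0%N -> count (@is_marker p) l = size l.
Proof.
elim: l => [|[T|] l IH] //= h.
by rewrite IH.
Qed.

Lemma count_rcons_Some (l : seq (option (ctree p))) T :
  count (@is_marker p) (rcons l (Some T)) = count (@is_marker p) l.
Proof. by elim: l => //= x l ->. Qed.

Lemma count_rcons_None (l : seq (option (ctree p))) :
  count (@is_marker p) (rcons l None) = (count (@is_marker p) l).+1.
Proof. by elim: l => //= x l ->; rewrite addnS. Qed.

Lemma LB_some P r l T' : node_ok P r (rcons l (Some T')) ->
  exists2 v, cand P r v & v <= cost (CNode r (rcons l (Some T'))).
Proof.
case=> h1 h2 h3 h4 [h5 h6].
rewrite subtrees_rcons in h2 h3 h4 h5 h6.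
have hcl : count (@is_marker p) l = 1%N.
  by rewrite -(count_rcons_Some l T').
have hT' : tree_on (tset T') (troot T') T' by apply: h3; apply/In_rcons; right.
have hr' : r \notin tset T' by apply: h5; apply/In_rcons; right.
rewrite big_rcons_set in h4.
rewrite costE -cats1 goc_cat goc_Some goc_nil.
case: (ltnP 0 (size (subtrees l))) => hs.
- set Q := r |: \bigcup_(T0 <- subtrees l) tset T0.
  have hQ : tree_on Q r (CNode r l).
    apply: node_okP; split => //.
    + by move=> T0 H; apply: h3; apply/In_rcons; left.
    + split; first by move=> T0 H; apply: h5; apply/In_rcons; left.
      by move: h6; rewrite map_rcons pairwise_rcons => /andP [].
  have hdisj : [disjoint Q & tset T'].
    rewrite disjoints_subset subUset sub1set inE hr' /= -disjoints_subset.
    apply: disj_bigcup => T0 H.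
    move: h6; rewrite map_rcons pairwise_rcons all_map => /andP [/allIn H6 _].
    exact: H6 T0 H.
  have hP : P = Q :|: tset T' by rewrite h4 setUA.
  have hPQ : P :\: Q = tset T'.
    by rewrite hP setDUl setDv set0U; apply/setDidPl; rewrite disjoint_sym.
  exists (Num.max (OPT Q r) (OPT (P :\: Q) (troot T'))
          + alpha (troot T') r + beta (troot T') r * Size (P :\: Q)).
  + right; exists Q, (troot T'); split => //; split.
    * by rewrite hP subsetUl.
    * by apply/setU1P; left.
    * case es: (subtrees l) hs => [|T1 s] // _.
      have hT1 : List.In T1 (subtrees l) by rewrite es; left.
      have hrT1 : r \notin tset T1 by apply: h5; apply/In_rcons; left.
      have hsub : [set r; troot T1] \subset Q.
        apply/subsetP => x; rewrite !inE => /orP [/eqP->|/eqP->].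
          by rewrite eqxx.
        apply/orP; right; apply: (subsetP (sub_bigcup hT1)).
        exact: troot_in.
      apply: leq_trans (subset_leq_card hsub); rewrite cards2.
      case: eqP => // e; move: hrT1; rewrite e troot_in //.
    * by rewrite hPQ; apply/set0Pn; exists (troot T'); exact: troot_in.
    * by rewrite hPQ troot_in.
  + rewrite hPQ !lerD2r; apply: le_max2; first exact: OPT_le hQ.
    exact: OPT_le hT'.
- have hsz : size (subtrees l) = 0%N by apply/eqP; rewrite -leqn0.
  have hl : l = [:: None].
    move: (nosub_count hsz); rewrite hcl.
    case: l hsz {h1 h2 h3 h4 h5 h6 hcl hs} => [|[T0|] [|y l']] //.
  rewrite hl in h4 *; rewrite /= in h4.
  rewrite big_nil set0U in h4.
  have hPr : P :\ r = tset T' by rewrite h4 setU1K.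
  exists (Num.max (gamma r * m r) (OPT (P :\ r) (troot T'))
              + alpha (troot T') r + beta (troot T') r * Size (P :\ r)).
  + by left; exists (troot T') => //; rewrite hPr troot_in.
  + rewrite goc_None goc_nil add0r hPr !lerD2r; apply: le_max2 => //.
    exact: OPT_le hT'.
Qed.

Lemma LB P r T : tree_on P r T -> (1 < #|P|)%N ->
  exists2 v, cand P r v & v <= cost T.
Proof.
move=> hT hP; have [es [-> hok]] := tree_on_node hT hP.
case/lastP: es hok => [|l [T'|]] hok.
- by case: hok => _ /=; rewrite /subtrees.
- exact: LB_some.
- case: hok => h1 h2 h3 h4 [h5 h6].
  rewrite subtrees_rcons in h2 h3 h4 h5 h6.
  rewrite count_rcons_None in h1; case: h1 => h1.
  case/lastP: l h1 h2 h3 h4 h5 h6 => [|l' [T'|]] h1 h2 h3 h4 h5 h6.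
  + by rewrite /subtrees in h2.
  + have hok : node_ok P r (rcons (None :: l') (Some T')).
      split => //.
      * rewrite (count_rcons_Some (None :: l') T').
        rewrite count_rcons_Some in h1.
        by rewrite /= h1.
    have [v hv hle] := LB_some hok.
    exists v => //; apply: le_trans hle _.
    rewrite !costE -!cats1 cat_cons goc_None [in X in _ <= X]goc_cat goc_None goc_nil.
    exact: (goc_shift r (l' ++ [:: Some T']) 0 (mulr_ge0 (hgamma r) (hm r))).
  + by rewrite count_rcons_None in h1.
Qed.

Lemma UB (P : {set 'I_p}) (r : 'I_p) (v : R) : r \in P ->
  (forall (S : {set 'I_p}) (s : 'I_p), s \in S -> (#|S| < #|P|)%N ->
      exists T, tree_on S s T /\ cost T = OPT S s) ->
  cand P r v -> exists T, tree_on P r T /\ cost T = v.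
Proof.
move=> hr IH.
case => [[r' hr' ->] | [Q [r' [[hQP hrQ hQ2 hPQ0 hr'PQ] ->]]]].
- have [T0 [hT0 hc0]] : exists T, tree_on (P :\ r) r' T /\ cost T = OPT (P :\ r) r'.
    apply: IH => //; rewrite (cardsD1 r P) hr; exact: ltnSn.
  have [ht0 hr0] := tree_on_tset hT0.
  exists (CNode r [:: None; Some T0]); split.
  + apply: node_okP; split => //.
    * by move=> T [<-|[]]; rewrite ht0 hr0.
    * by rewrite /subtrees /= big_seq1 ht0 setD1K.
    * split; last by [].
      by move=> T [<-|[]]; rewrite ht0 setD11.
  + by rewrite costE goc_None goc_Some goc_nil add0r ht0 hr0 hc0.
- have hsubc : (#|Q| <= #|P|)%N := subset_leq_card hQP.
  have hcD : #|P :\: Q| = (#|P| - #|Q|)%N by rewrite cardsD (setIidPr hQP).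
  have hpos : (0 < #|P :\: Q|)%N by rewrite card_gt0.
  have [TQ [hTQ hcQ]] : exists T, tree_on Q r T /\ cost T = OPT Q r.
    by apply: IH => //; lia.
  have [T' [hT' hc']] : exists T, tree_on (P :\: Q) r' T /\ cost T = OPT (P :\: Q) r'.
    by apply: IH => //; lia.
  have [ht' hr0'] := tree_on_tset hT'.
  have [l [eTQ hok]] := tree_on_node hTQ hQ2.
  subst TQ.
  exists (CNode r (rcons l (Some T'))); split.
  + apply: node_okP; case: hok => h1 h2 h3 h4 [h5 h6]; split.
    * by rewrite count_rcons_Some.
    * by rewrite subtrees_rcons size_rcons.
    * rewrite subtrees_rcons => T /In_rcons [H|->]; first exact: h3.
      by rewrite ht' hr0'.
    * rewrite subtrees_rcons big_rcons_set setUA -h4 ht'.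
      by rewrite -{1}(setID P Q) (setIidPr hQP).
    * split.
        rewrite subtrees_rcons => T /In_rcons [H|->]; first exact: h5.
        by rewrite ht' in_setD hrQ.
      rewrite subtrees_rcons map_rcons pairwise_rcons h6 andbT all_map.
      apply/allIn => T H /=.
      have hsub : tset T \subset Q.
        by rewrite h4; apply: subset_trans (sub_bigcup H) (subsetUr _ _).
      rewrite ht' disjoints_subset; apply: subset_trans hsub _.
      by apply/subsetP => x hx; rewrite !inE hx.
  + rewrite costE -cats1 goc_cat goc_Some goc_nil -costE hcQ hc' ht' hr0'.
    by [].
Qed.

Lemma attain n : forall (P : {set 'I_p}) (r : 'I_p), (#|P| <= n)%N -> r \in P ->
  exists T, tree_on P r T /\ cost T = OPT P r.
Proof.
elim: n => [|n IH] P r hn hr.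
  by move: hn; rewrite (cardsD1 r P) hr.
case: (leqP #|P| 1) => h1.
  have eP : P = [set r].
    by apply/eqP; rewrite eq_sym eqEcard sub1set hr cards1 h1.
  subst P; exists (CNode r [::]); split; first exact: trivial_on.
  apply/le_anti/andP; split; last exact: OPT_le (trivial_on r).
  rewrite costE goc_nil; apply: OPT_ge (trivial_on r) _ => T _; exact: cost_ge0.
have IH' : forall (S : {set 'I_p}) (s : 'I_p), s \in S -> (#|S| < #|P|)%N ->
      exists T, tree_on S s T /\ cost T = OPT S s.
  by move=> S s hs hS; apply: IH => //; lia.
pose okc : pred ('I_p * option {set 'I_p}) := fun i =>
  match i.2 with
  | None => i.1 \in P :\ r
  | Some Q => [&& Q \subset P, r \in Q, (1 < #|Q|)%N, P :\: Q != set0 & i.1 \in P :\: Q]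
  end.
pose valc (i : 'I_p * option {set 'I_p}) : R :=
  match i.2 with
  | None => Num.max (gamma r * m r) (OPT (P :\ r) i.1)
              + alpha i.1 r + beta i.1 r * Size (P :\ r)
  | Some Q => Num.max (OPT Q r) (OPT (P :\: Q) i.1)
                  + alpha i.1 r + beta i.1 r * Size (P :\: Q)
  end.
have okc_cand : forall i, okc i -> cand P r (valc i).
  case=> r' [Q|] /= h.
    by right; exists Q, r'; case/and5P: h => *; split.
  by left; exists r'.
have cand_okc : forall v, cand P r v -> exists i, okc i /\ v = valc i.
  move=> v [[r' hr' ->]|[Q [r' [[? ? ? ? ?] ->]]]].
    by exists (r', None).
  by exists (r', Some Q); split => //; apply/and5P.
have : (0 < #|P :\ r|)%N by move: h1; rewrite (cardsD1 r P) hr.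
rewrite card_gt0 => /set0Pn [r' hr'].
have hi0 : okc (r', None) by [].
have [i hi hmin] := arg_minP valc hi0.
have [T [hT hcT]] := UB hr IH' (okc_cand i hi).
exists T; split => //.
apply/le_anti/andP; split; last exact: OPT_le hT.
rewrite hcT; apply: OPT_ge hT _ => T1 hT1.
have [v hv hle] := LB hT1 h1.
have [j [hj ev]] := cand_okc v hv.
rewrite ev in hle; exact: le_trans (hmin j hj) hle.
Qed.

Lemma main_sec :
  (forall q : 'I_p, OPT [set q] q = 0) /\
  (forall (P : {set 'I_p}) (r : 'I_p), r \in P -> (2 <= #|P|)%N ->
     cand P r (OPT P r) /\ (forall v, cand P r v -> OPT P r <= v)).
Proof.
split.
  move=> q; apply/le_anti/andP; split; first exact: OPT_le (trivial_on q).
  by apply: OPT_ge (trivial_on q) _ => T _; exact: cost_ge0.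
move=> P r hr h1.
have IH' : forall (S : {set 'I_p}) (s : 'I_p), s \in S -> (#|S| < #|P|)%N ->
      exists T, tree_on S s T /\ cost T = OPT S s.
  by move=> S s hs hS; apply: (attain (leqnn _)).
have [T [hT hc]] := attain (leqnn #|P|) hr.
have [v hv hle] := LB hT h1.
have [Tv [hTv hcv]] := UB hr IH' hv.
have e : OPT P r = v.
  apply/le_anti/andP; split; first by rewrite -hcv; exact: OPT_le hTv.
  by rewrite -hc.
rewrite e; split => // v' hv'.
have [T' [hT' <-]] := UB hr IH' hv'.
by rewrite -e; exact: OPT_le hT'.
Qed.

End Aux.

Theorem corollary1 (R : realType) (p : nat) (m : 'I_p -> R)
    (alpha beta : 'I_p -> 'I_p -> R) (gamma : 'I_p -> R)
    (hm : forall i, 0 <= m i)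
    (halpha : forall i j, 0 <= alpha i j)
    (hbeta : forall i j, 0 <= beta i j)
    (hgamma : forall i, 0 <= gamma i) :
  let OPT := OPT m alpha beta gamma in
  let Size := Size m in
  (forall q : 'I_p, OPT [set q] q = 0) /\
  (forall (P : {set 'I_p}) (r : 'I_p), r \in P -> (2 <= #|P|)%N ->
     let cand : R -> Prop := fun v =>
       (exists2 r', r' \in P :\ r &
          v = Num.max (gamma r * m r) (OPT (P :\ r) r')
              + alpha r' r + beta r' r * Size (P :\ r))
       \/
       (exists (Q : {set 'I_p}) (r' : 'I_p),
          [/\ Q \subset P, r \in Q, (2 <= #|Q|)%N, P :\: Q != set0 &
              r' \in P :\: Q] /\
              v = Num.max (OPT Q r) (OPT (P :\: Q) r')
                  + alpha r' r + beta r' r * Size (P :\: Q)) in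
     cand (OPT P r) /\ (forall v, cand v -> OPT P r <= v)).
Proof.
exact: (main_sec hm halpha hbeta hgamma).
Qed.
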